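(* Let $\alpha\in(0,\tfrac12)$. For every sufficiently large $\nu$ (depending on $\alpha$), $$\mathbb P\big(D_{i_{\max},j}=0\ \text{for all } j=0,\dots,n_{i_{\max}}-1\big)=1-o(n^{-1/2})\quad\text{as } n\to\infty.$$
   Context: KPKVB setting: fix $\alpha>0$, $\nu>0$, an integer $n>\nu$, and $R=2\ln(n/\nu)$. $\mathcal D_R$ is the hyperbolic disk (curvature $-1$) of radius $R$ around the origin, with polar coordinates $(r,\theta)$, $r\in[0,R)$, $\theta\in(0,2\pi]$; $f_{\alpha,R}(r,\theta)=\frac{\alpha\sinh(\alpha r)}{2\pi(\cosh(\alpha R)-1)}$. $\mathcal P$ is a Poisson point process on $\mathcal D_R$ with intensity measure $n f_{\alpha,R}(r,\theta)\,dr\,d\theta$. Tiling: $i_{\max}=\lceil 0.9R/(2\ln 2)\rceil$, $n_i=2^{4-i+\lfloor R/(2\ln 2)\rfloor}$ for integers $0\le i\le i_{\max}$; $(i,j)$ is admissible if $0\le i\le i_{\max}$, $0\le j<n_i$; $T_{i,j}=\{(r,\theta)\in\mathcal D_R:\ R-2(i+1)\ln 2\le r<R-2i\ln 2,\ 2\pi j/n_i<\theta\le 2\pi(j+1)/n_i\}$. $N(T_{i,j})=|\mathcal P\cap T_{i,j}|$. Demands: $D_{0,j}=N(T_{0,j})$ if $N(T_{0,j})\in\{1,2\}$ and $D_{0,j}=0$ otherwise; for $0<i\le i_{\max}$, $D_{i,j}=\max\{D_{i-1,2j}+D_{i-1,2j+1}+3-N(T_{i,j}),0\}$. *)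

(* Defs.v *)
From Stdlib Require Import Reals Lra Lia ZArith Arith List Bool ClassicalEpsilon.
Open Scope R_scope.

Definition Rrad (nu : R) (n : nat) : R := 2 * ln (INR n / nu).

(* floor and ceiling via Stdlib's [up] (x < up x <= x + 1). *)
Definition floorZ (x : R) : Z := (up x - 1)%Z.
Definition ceilZ (x : R) : Z := (1 - up (- x))%Z.

Definition imax (nu : R) (n : nat) : nat :=
  Z.to_nat (ceilZ ((9 / 10) * Rrad nu n / (2 * ln 2))).

(* n_i = 2^(4 - i + floor (R / (2 ln 2))) (exponent is >= 2 for 0 <= i <= i_max) *)
Definition ntiles (nu : R) (n : nat) (i : nat) : nat :=
  (2 ^ Z.to_nat (4 - Z.of_nat i + floorZ (Rrad nu n / (2 * ln 2))))%nat.

(* radial range of tile row i, intersected with [0, R) *)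
Definition r_lo (nu : R) (n i : nat) : R := Rmax 0 (Rrad nu n - 2 * (INR i + 1) * ln 2).
Definition r_hi (nu : R) (n i : nat) : R := Rmax 0 (Rrad nu n - 2 * INR i * ln 2).

(* Expected number of points of P in T_{i,j}:
   n * (angular width 2 pi / n_i) * int_{r_lo}^{r_hi} f_{alpha,R}(r) dr, where
   int alpha sinh(alpha r) / (2 pi (cosh (alpha R) - 1)) dr
     = (cosh (alpha r_hi) - cosh (alpha r_lo)) / (2 pi (cosh (alpha R) - 1)). *)
Definition tile_mean (alpha nu : R) (n i : nat) : R :=
  INR n * (2 * PI / INR (ntiles nu n i)) *
  ((cosh (alpha * r_hi nu n i) - cosh (alpha * r_lo nu n i)) /
   (2 * PI * (cosh (alpha * Rrad nu n) - 1))).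

Definition poisson_pmf (mu : R) (k : nat) : R := exp (- mu) * mu ^ k / INR (fact k).

(* A configuration of tile counts: c i j = N(T_{i,j}). *)
Definition config := nat -> nat -> nat.

(* Demands D_{i,j} (truncated nat subtraction = max(.,0)). *)
Fixpoint demand (c : config) (i j : nat) : nat :=
  match i with
  | O => if (c O j =? 1)%nat || (c O j =? 2)%nat then c O j else O
  | S i' => (demand c i' (2 * j) + demand c i' (2 * j + 1) + 3 - c i j)%nat
  end.

Definition event (nu : R) (n : nat) (c : config) : bool :=
  forallb (fun j => (demand c (imax nu n) j =? 0)%nat) (seq 0 (ntiles nu n (imax nu n))).

Definition tiles (nu : R) (n : nat) : list (nat * nat) :=
  flat_map (fun i => map (fun j => (i, j)) (seq 0 (ntiles nu n i))) (seq 0 (S (imax nu n))).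

Definition upd (c : config) (i j k : nat) : config :=
  fun a b => if (a =? i)%nat && (b =? j)%nat then k else c a b.

Fixpoint csum (alpha nu : R) (n M : nat) (L : list (nat * nat)) (c : config) : R :=
  match L with
  | nil => if event nu n c then 1 else 0
  | (i, j) :: L' =>
      sum_f_R0 (fun k => poisson_pmf (tile_mean alpha nu n i) k *
                         csum alpha nu n M L' (upd c i j k)) M
  end.

Definition seq_lim (u : nat -> R) : R := epsilon (inhabits 0) (fun l => Un_cv u l).

(* P(D_{i_max,j} = 0 for all j): the counts N(T_{i,j}) of a Poisson process on
   the disjoint tiles are independent Poisson(tile_mean) variables. *)
Definition prob_no_demand (alpha nu : R) (n : nat) : R :=
  seq_lim (fun M => csum alpha nu n M (tiles nu n) (fun _ _ => O)).

(* Main.v *)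
Require Import Defs.
From Stdlib Require Import Reals Lra Lia ZArith Arith List Bool Classical ClassicalEpsilon FunctionalExtensionality.
Open Scope R_scope.

Fixpoint En (w : nat -> nat -> R) (M : nat) (L : list (nat * nat))
  (f : config -> R) (c : config) : R :=
  match L with
  | nil => f c
  | (i, j) :: L' => sum_f_R0 (fun k => w i k * En w M L' f (upd c i j k)) M
  end.

Definition WokL (w : nat -> nat -> R) (M : nat) (L : list (nat * nat)) : Prop :=
  forall i j, In (i, j) L -> (forall k, 0 <= w i k) /\ sum_f_R0 (w i) M = 1.

Definition dep (f : config -> R) (A : nat -> nat -> Prop) : Prop :=
  forall c c', (forall a b, A a b -> c a b = c' a b) -> f c = f c'.

Lemma WokL_tl w M a L : WokL w M (a :: L) -> WokL w M L.
Proof. intros H i j Hin. apply (H i j). right; auto. Qed.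

Lemma upd_same c i j k : upd c i j k i j = k.
Proof. unfold upd. rewrite !Nat.eqb_refl. reflexivity. Qed.

Lemma upd_other c i j k a b : (a, b) <> (i, j) -> upd c i j k a b = c a b.
Proof.
  intro H. unfold upd. destruct (Nat.eqb_spec a i), (Nat.eqb_spec b j); simpl; auto.
  subst; congruence.
Qed.

Lemma sum_const_mul (u : nat -> R) (K : R) M :
  sum_f_R0 (fun k => u k * K) M = sum_f_R0 u M * K.
Proof. rewrite Rmult_comm, scal_sum. reflexivity. Qed.

Lemma En_ext w M L : forall f g c,
  (forall c', (forall a b, ~ In (a, b) L -> c a b = c' a b) -> f c' = g c') ->
  En w M L f c = En w M L g c.
Proof.
  induction L as [|[i j] L IH]; intros f g c H; simpl.
  - apply H; auto.
  - apply sum_eq; intros k _. f_equal. apply IH. intros c' Hc'. apply H.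
    intros a b Hab. rewrite <- Hc'.
    + rewrite upd_other; auto. intro E; apply Hab; left; congruence.
    + intro; apply Hab; right; auto.
Qed.

Lemma En_dep w M L f A : dep f A -> forall c c',
  (forall a b, A a b -> ~ In (a, b) L -> c a b = c' a b) ->
  En w M L f c = En w M L f c'.
Proof.
  intro Hd. induction L as [|[i j] L IH]; intros c c' H; simpl.
  - apply Hd. intros a b Ha. apply H; auto.
  - apply sum_eq; intros k _. f_equal. apply IH.
    intros a b Ha Hn. unfold upd.
    destruct (Nat.eqb_spec a i), (Nat.eqb_spec b j); simpl; auto;
    apply H; auto; intros [E|E]; [congruence| |congruence| |congruence| ]; auto.
Qed.

Lemma En_const w M L K c : WokL w M L -> En w M L (fun _ => K) c = K.
Proof.
  revert c; induction L as [|[i j] L IH]; intros c HW; simpl; auto.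
  rewrite (sum_eq _ (fun k => w i k * K)).
  - rewrite sum_const_mul. destruct (HW i j (or_introl eq_refl)) as [_ ->]. ring.
  - intros k _. rewrite IH; auto. eapply WokL_tl; eauto.
Qed.

Lemma En_le w M L f g c : WokL w M L -> (forall c, f c <= g c) ->
  En w M L f c <= En w M L g c.
Proof.
  revert c; induction L as [|[i j] L IH]; intros c HW H; simpl; auto.
  apply sum_Rle; intros k _. apply Rmult_le_compat_l.
  - apply (HW i j (or_introl eq_refl)).
  - apply IH; auto. eapply WokL_tl; eauto.
Qed.

Lemma En_plus w M L f g c :
  En w M L (fun c => f c + g c) c = En w M L f c + En w M L g c.
Proof.
  revert c; induction L as [|[i j] L IH]; intros c; simpl; auto.
  rewrite <- plus_sum. apply sum_eq; intros k _. rewrite IH. ring.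
Qed.

Lemma En_scal w M L K f c :
  En w M L (fun c => K * f c) c = K * En w M L f c.
Proof.
  revert c; induction L as [|[i j] L IH]; intros c; simpl; auto.
  rewrite scal_sum. apply sum_eq; intros k _. rewrite IH. ring.
Qed.

Lemma En_indep w M L : WokL w M L -> forall f1 f2 A B,
  dep f1 A -> dep f2 B -> (forall a b, A a b -> B a b -> False) ->
  forall c, En w M L (fun c => f1 c * f2 c) c = En w M L f1 c * En w M L f2 c.
Proof.
  intros HW f1 f2 A B H1 H2 HAB.
  induction L as [|[i j] L IH]; intros c; simpl; auto.
  assert (HW' : WokL w M L) by (eapply WokL_tl; eauto).
  destruct (HW i j (or_introl eq_refl)) as [_ Hs].
  rewrite (sum_eq _ (fun k => w i k * (En w M L f1 (upd c i j k) * En w M L f2 (upd c i j k))))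
    by (intros k _; rewrite IH; auto).
  destruct (classic (A i j)) as [HA|HA].
  - assert (HB : ~ B i j) by (intro; eapply HAB; eauto).
    assert (E : forall k, En w M L f2 (upd c i j k) = En w M L f2 c).
    { intro k. apply (En_dep w M L f2 B H2). intros a b Hb _.
      rewrite upd_other; auto. intro E; inversion E; subst; auto. }
    rewrite (sum_eq _ (fun k => w i k * En w M L f1 (upd c i j k) * En w M L f2 c))
      by (intros k _; rewrite E; ring).
    rewrite (sum_eq (fun k => w i k * En w M L f2 (upd c i j k)) (fun k => w i k * En w M L f2 c))
      by (intros k _; rewrite E; ring).
    rewrite !sum_const_mul, Hs. ring.
  - assert (E : forall k, En w M L f1 (upd c i j k) = En w M L f1 c).
    { intro k. apply (En_dep w M L f1 A H1). intros a b Ha _.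
      rewrite upd_other; auto. intro E; inversion E; subst; auto. }
    rewrite (sum_eq _ (fun k => w i k * En w M L f2 (upd c i j k) * En w M L f1 c))
      by (intros k _; rewrite E; ring).
    rewrite (sum_eq (fun k => w i k * En w M L f1 (upd c i j k)) (fun k => w i k * En w M L f1 c))
      by (intros k _; rewrite E; ring).
    rewrite !sum_const_mul, Hs. ring.
Qed.

Lemma En_single w M L (h : nat -> R) i j : WokL w M L -> In (i, j) L -> forall c,
  En w M L (fun c => h (c i j)) c = sum_f_R0 (fun k => w i k * h k) M.
Proof.
  intros HW Hin. induction L as [|[a b] L IH]; intros c; simpl; [destruct Hin|].
  assert (HW' : WokL w M L) by (eapply WokL_tl; eauto).
  destruct (classic (In (i, j) L)) as [HL|HL].
  - rewrite (sum_eq _ (fun k => w a k * sum_f_R0 (fun k => w i k * h k) M))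
      by (intros k _; rewrite IH; auto).
    rewrite sum_const_mul. destruct (HW a b (or_introl eq_refl)) as [_ ->]. ring.
  - destruct Hin as [E|E]; [|contradiction]. inversion E; subst.
    apply sum_eq; intros k _. f_equal.
    rewrite (En_ext w M L _ (fun _ => h k)).
    + apply En_const; auto.
    + intros c' Hc'. rewrite <- Hc'; auto. rewrite upd_same; auto.
Qed.

Definition inS (i j a b : nat) : Prop := (a <= i)%nat /\ (b / 2 ^ (i - a))%nat = j.

Lemma inS_child i j a b : inS i (2 * j) a b \/ inS i (2 * j + 1) a b -> inS (S i) j a b.
Proof.
  unfold inS. intros [[Ha Hb]|[Ha Hb]]; split; try lia;
  replace (S i - a)%nat with (S (i - a)) by lia; rewrite Nat.pow_succ_r', Nat.mul_comm, <- Nat.Div0.div_div;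
  try (apply Nat.pow_nonzero; lia); try lia; rewrite Hb.
  - rewrite Nat.mul_comm, Nat.div_mul; lia.
  - replace (2 * j + 1)%nat with (1 + j * 2)%nat by lia. rewrite Nat.div_add by lia. simpl. lia.
Qed.

Lemma inS_self i j : inS i j i j.
Proof. unfold inS. split; [lia|]. rewrite Nat.sub_diag. apply Nat.div_1_r. Qed.

Lemma demand_dep : forall i j c c', (forall a b, inS i j a b -> c a b = c' a b) ->
  demand c i j = demand c' i j.
Proof.
  induction i as [|i IH]; intros j c c' H; simpl.
  - rewrite (H 0%nat j) by apply inS_self. reflexivity.
  - rewrite (IH (j + (j + 0))%nat c c'), (IH (j + (j + 0) + 1)%nat c c'), (H (S i) j) by
      (try apply inS_self; intros a b Hab; apply H; apply inS_child; replace (2 * j)%nat with (j + (j + 0))%nat by lia; auto).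
    reflexivity.
Qed.

Definition Hd (c : config) (i j : nat) : R := exp (INR (demand c i j)).

Lemma Hd_dep i j : dep (fun c => Hd c i j) (inS i j).
Proof. intros c c' H. unfold Hd. rewrite (demand_dep i j c c'); auto. Qed.

Lemma exp_pow_INR x n : exp x ^ n = exp (x * INR n).
Proof.
  induction n as [|n IH]; simpl. rewrite Rmult_0_r, exp_0; reflexivity.
  rewrite IH, <- exp_plus. f_equal. destruct n; simpl; ring.
Qed.

Lemma Hd_pos c i j : 1 <= Hd c i j.
Proof. unfold Hd. pose proof (pos_INR (demand c i j)). pose proof (exp_ineq1_le (INR (demand c i j))). lra. Qed.

Lemma exp_le x y : x <= y -> exp x <= exp y.
Proof. intros [H|H]. left; apply exp_increasing; auto. subst; lra. Qed.

Lemma Hd_row0 c j : Hd c 0 j <= exp 2.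
Proof.
  unfold Hd. simpl. apply exp_le.
  destruct (c 0%nat j =? 1)%nat eqn:E1; simpl.
  - apply Nat.eqb_eq in E1. rewrite E1. simpl. lra.
  - destruct (c 0%nat j =? 2)%nat eqn:E2; simpl.
    + apply Nat.eqb_eq in E2. rewrite E2. simpl. lra.
    + simpl. lra.
Qed.

Lemma Hd_step c i j : Hd c (S i) j <=
  1 + exp 3 * (exp (-1) ^ (c (S i) j) * (Hd c i (2 * j) * Hd c i (2 * j + 1))).
Proof.
  unfold Hd. simpl demand.
  replace (j + (j + 0))%nat with (2 * j)%nat by lia.
  set (a := demand c i (2 * j)). set (b := demand c i (2 * j + 1)). set (N := c (S i) j).
  rewrite exp_pow_INR.
  assert (0 < exp 3 * (exp (-1 * INR N) * (exp (INR a) * exp (INR b)))).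
  { repeat apply Rmult_lt_0_compat; apply exp_pos. }
  destruct (Nat.le_gt_cases N (a + b + 3)).
  - rewrite minus_INR by lia. rewrite !plus_INR. 
    replace (INR 3) with 3 by (simpl; ring).
    match goal with |- _ <= 1 + ?X => assert (exp (INR a + INR b + 3 - INR N) = X) end.
    { rewrite <- !exp_plus. f_equal. ring. }
    lra.
  - replace (a + b + 3 - N)%nat with 0%nat by lia. simpl. rewrite exp_0. lra.
Qed.

Definition Mx (w : nat -> nat -> R) M i := sum_f_R0 (fun k => w i k * exp (-1) ^ k) M.

Lemma En_affine w M L a b f c : WokL w M L ->
  En w M L (fun c => a + b * f c) c = a + b * En w M L f c.
Proof.
  intro HW. rewrite (En_plus w M L (fun _ => a) (fun c => b * f c)).
  rewrite En_const, En_scal; auto.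
Qed.

Lemma En_nonneg w M L f c : WokL w M L -> (forall c, 0 <= f c) -> 0 <= En w M L f c.
Proof. intros HW H. rewrite <- (En_const w M L 0 c HW). apply En_le; auto. Qed.

Lemma Mx_nonneg w M L i j : WokL w M L -> In (i, j) L -> 0 <= Mx w M i.
Proof.
  intros HW Hin. unfold Mx. destruct (HW i j Hin) as [Hn _].
  apply cond_pos_sum. intro k. apply Rmult_le_pos; auto. apply pow_le. left; apply exp_pos.
Qed.

Lemma rec_step w M L i j c : WokL w M L -> In (S i, j) L ->
  En w M L (fun c => Hd c (S i) j) c <=
  1 + exp 3 * (Mx w M (S i) * (En w M L (fun c => Hd c i (2 * j)) c *
                               En w M L (fun c => Hd c i (2 * j + 1)) c)).
Proof.
  intros HW Hin.
  eapply Rle_trans. apply En_le; auto. intro c'. apply Hd_step.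
  rewrite En_affine by auto.
  rewrite (En_indep w M L HW (fun c => exp (-1) ^ c (S i) j)
     (fun c => Hd c i (2 * j) * Hd c i (2 * j + 1))
     (fun a b => a = S i /\ b = j) (fun a b => inS i (2 * j) a b \/ inS i (2 * j + 1) a b)).
  - rewrite (En_indep w M L HW (fun c => Hd c i (2 * j)) (fun c => Hd c i (2 * j + 1))
       (inS i (2 * j)) (inS i (2 * j + 1))).
    + rewrite (En_single w M L (fun k => exp (-1) ^ k) (S i) j HW Hin). unfold Mx. lra.
    + apply Hd_dep.
    + apply Hd_dep.
    + unfold inS. intros a b [_ H1] [_ H2]. lia.
  - intros c1 c2 H. rewrite (H (S i) j); auto.
  - intros c1 c2 H. rewrite (Hd_dep i (2 * j) c1 c2), (Hd_dep i (2 * j + 1) c1 c2); auto.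
  - unfold inS. intros a b [-> _] [[H1 _]|[H1 _]]; lia.
Qed.

Lemma exp_sum_eq : exp 3 * exp (-7) * exp 2 * exp 2 = 1.
Proof. rewrite <- !exp_plus. replace (3 + -7 + 2 + 2) with 0 by ring. apply exp_0. Qed.

Lemma two_le_exp2 : 2 <= exp 2.
Proof. pose proof (exp_ineq1_le 2). lra. Qed.

Lemma rec_all w M L (nt : nat -> nat) im c :
  WokL w M L ->
  (forall i j, (i <= im)%nat -> (j < nt i)%nat -> In (i, j) L) ->
  (forall i, (i < im)%nat -> nt i = (2 * nt (S i))%nat) ->
  (forall i, (1 <= i <= im)%nat -> Mx w M i <= exp (-7)) ->
  forall i j, (i <= im)%nat -> (j < nt i)%nat -> En w M L (fun c => Hd c i j) c <= exp 2.
Proof.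
  intros HW Hin Hnt Hm. induction i as [|i IH]; intros j Hi Hj.
  - rewrite <- (En_const w M L (exp 2) c HW). apply En_le; auto. intro; apply Hd_row0.
  - eapply Rle_trans. apply rec_step; auto.
    assert (Hc : (2 * j + 1 < nt i)%nat) by (rewrite Hnt; lia).
    pose proof (IH (2 * j)%nat ltac:(lia) ltac:(lia)) as H1.
    pose proof (IH (2 * j + 1)%nat ltac:(lia) ltac:(lia)) as H2.
    pose proof (En_nonneg w M L (fun c => Hd c i (2 * j)) c HW (fun c => Rle_trans _ _ _ Rle_0_1 (Hd_pos c _ _))).
    pose proof (En_nonneg w M L (fun c => Hd c i (2 * j + 1)) c HW (fun c => Rle_trans _ _ _ Rle_0_1 (Hd_pos c _ _))).
    pose proof (Hm (S i) ltac:(lia)).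
    pose proof (Mx_nonneg w M L (S i) j HW (Hin _ _ Hi Hj)).
    set (A := En w M L (fun c => Hd c i (2 * j)) c) in *.
    set (B := En w M L (fun c => Hd c i (2 * j + 1)) c) in *.
    set (m := Mx w M (S i)) in *.
    assert (m * (A * B) <= exp (-7) * (exp 2 * exp 2)).
    { apply Rmult_le_compat; auto. apply Rmult_le_pos; auto.
      apply Rmult_le_compat; auto. }
    pose proof exp_sum_eq. pose proof two_le_exp2. pose proof (exp_pos 3).
    assert (exp 3 * (m * (A * B)) <= exp 3 * (exp (-7) * (exp 2 * exp 2))) by (apply Rmult_le_compat_l; lra).
    nra.
Qed.

Lemma rec_top w M L (nt : nat -> nat) im c :
  WokL w M L ->
  (forall i j, (i <= im)%nat -> (j < nt i)%nat -> In (i, j) L) ->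
  (forall i, (i < im)%nat -> nt i = (2 * nt (S i))%nat) ->
  (forall i, (1 <= i <= im)%nat -> Mx w M i <= exp (-7)) ->
  forall i j, (S i <= im)%nat -> (j < nt (S i))%nat ->
  En w M L (fun c => Hd c (S i) j) c <= 1 + exp 7 * Mx w M (S i).
Proof.
  intros HW Hin Hnt Hm i j Hi Hj.
  eapply Rle_trans. apply rec_step; auto.
  pose proof (rec_all w M L nt im c HW Hin Hnt Hm i (2 * j)%nat ltac:(lia) ltac:(rewrite Hnt; lia)) as H1.
  pose proof (rec_all w M L nt im c HW Hin Hnt Hm i (2 * j + 1)%nat ltac:(lia) ltac:(rewrite Hnt; lia)) as H2.
  pose proof (En_nonneg w M L (fun c => Hd c i (2 * j)) c HW (fun c => Rle_trans _ _ _ Rle_0_1 (Hd_pos c _ _))).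
  pose proof (En_nonneg w M L (fun c => Hd c i (2 * j + 1)) c HW (fun c => Rle_trans _ _ _ Rle_0_1 (Hd_pos c _ _))).
  pose proof (Mx_nonneg w M L (S i) j HW (Hin _ _ Hi Hj)).
  set (A := En w M L (fun c => Hd c i (2 * j)) c) in *.
  set (B := En w M L (fun c => Hd c i (2 * j + 1)) c) in *.
  set (m := Mx w M (S i)) in *.
  assert (A * B <= exp 2 * exp 2) by (apply Rmult_le_compat; auto).
  assert (E : exp 7 = exp 3 * (exp 2 * exp 2)) by (rewrite <- !exp_plus; f_equal; ring).
  rewrite E. pose proof (exp_pos 3).
  assert (m * (A * B) <= m * (exp 2 * exp 2)) by (apply Rmult_le_compat_l; auto).
  assert (exp 3 * (m * (A * B)) <= exp 3 * (m * (exp 2 * exp 2))) by (apply Rmult_le_compat_l; lra).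
  nra.
Qed.

Definition SL (l : list nat) (F : nat -> R) : R := fold_right (fun j acc => F j + acc) 0 l.

Lemma En_SL w M L l (F : nat -> config -> R) c : WokL w M L ->
  En w M L (fun c => SL l (fun j => F j c)) c = SL l (fun j => En w M L (F j) c).
Proof.
  intro HW. induction l as [|j l IH]; simpl.
  - apply En_const; auto.
  - rewrite (En_plus w M L (F j) (fun c => SL l (fun j => F j c))). rewrite IH. reflexivity.
Qed.

Lemma SL_le l F b : (forall j, In j l -> F j <= b) -> SL l F <= INR (length l) * b.
Proof.
  induction l as [|j l IH]; intros H. simpl; lra.
  change (SL (j :: l) F) with (F j + SL l F). change (length (j :: l)) with (S (length l)).
  rewrite S_INR. pose proof (H j (or_introl eq_refl)).
  assert (SL l F <= INR (length l) * b) by (apply IH; intros; apply H; right; auto). lra.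
Qed.

Lemma SL_nonneg l F : (forall j, 0 <= F j) -> 0 <= SL l F.
Proof. intros H; induction l; simpl. lra. pose proof (H a). lra. Qed.

Lemma ind_bound c im l :
  1 - SL l (fun j => Hd c im j - 1) <= (if forallb (fun j => demand c im j =? 0)%nat l then 1 else 0).
Proof.
  assert (Hp : forall j, 0 <= Hd c im j - 1) by (intro j; pose proof (Hd_pos c im j); lra).
  induction l as [|j l IH]; simpl. lra.
  pose proof (SL_nonneg l _ Hp). pose proof (Hp j).
  destruct (demand c im j =? 0)%nat eqn:E; simpl.
  - destruct (forallb _ l); lra.
  - apply Nat.eqb_neq in E.
    assert (1 <= INR (demand c im j)) by (change 1 with (INR 1); apply le_INR; lia).
    pose proof (exp_ineq1_le (INR (demand c im j))). unfold Hd in *. lra.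
Qed.

Definition expS (x : R) (M : nat) := sum_f_R0 (fun k => / INR (fact k) * x ^ k) M.

Lemma expS_cv x : Un_cv (expS x) (exp x).
Proof. unfold exp. destruct (exist_exp x) as [l Hl]. simpl. exact Hl. Qed.

Lemma expS_growing x : 0 <= x -> Un_growing (expS x).
Proof.
  intros Hx n. unfold expS. rewrite tech5.
  pose proof (INR_fact_lt_0 (S n)). pose proof (pow_le x (S n) Hx).
  assert (0 <= / INR (fact (S n)) * x ^ S n) by (apply Rmult_le_pos; auto; left; apply Rinv_0_lt_compat; auto).
  lra.
Qed.

Lemma expS_le x M : 0 <= x -> expS x M <= exp x.
Proof. intro Hx. apply growing_ineq; [apply expS_growing; auto | apply expS_cv]. Qed.

Lemma term_le_expS x M : 0 <= x -> x ^ M / INR (fact M) <= expS x M.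
Proof.
  intro Hx. destruct M. unfold expS; simpl; lra.
  unfold expS. rewrite tech5.
  assert (0 <= sum_f_R0 (fun k => / INR (fact k) * x ^ k) M).
  { apply cond_pos_sum. intro k. apply Rmult_le_pos. left; apply Rinv_0_lt_compat, INR_fact_lt_0. apply pow_le; auto. }
  unfold Rdiv. lra.
Qed.

Lemma exp_ge_pow x M : 0 <= x -> x ^ M / INR (fact M) <= exp x.
Proof. intro. eapply Rle_trans. apply term_le_expS; auto. apply expS_le; auto. Qed.

Definition PM (mu : R) (M : nat) := sum_f_R0 (poisson_pmf mu) M.

Lemma PM_eq mu M : PM mu M = exp (- mu) * expS mu M.
Proof.
  unfold PM, expS. rewrite scal_sum. apply sum_eq. intros k _. unfold poisson_pmf. unfold Rdiv. ring.
Qed.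

Lemma pmf_nonneg mu k : 0 <= mu -> 0 <= poisson_pmf mu k.
Proof.
  intro. unfold poisson_pmf. unfold Rdiv. apply Rmult_le_pos. apply Rmult_le_pos. left; apply exp_pos.
  apply pow_le; auto. left; apply Rinv_0_lt_compat, INR_fact_lt_0.
Qed.

Lemma PM_le1 mu M : 0 <= mu -> PM mu M <= 1.
Proof.
  intro. rewrite PM_eq. pose proof (expS_le mu M H). pose proof (exp_pos (- mu)).
  replace 1 with (exp (- mu) * exp mu) by (rewrite <- exp_plus; replace (- mu + mu) with 0 by ring; apply exp_0).
  apply Rmult_le_compat_l; lra.
Qed.

Lemma PM_pos mu M : 0 <= mu -> 0 < PM mu M.
Proof.
  intro. rewrite PM_eq. apply Rmult_lt_0_compat. apply exp_pos.
  unfold expS. induction M. simpl. lra. rewrite tech5.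
  assert (0 <= / INR (fact (S M)) * mu ^ S M) by (apply Rmult_le_pos; [left; apply Rinv_0_lt_compat, INR_fact_lt_0| apply pow_le; auto]).
  lra.
Qed.

Lemma PM_cv mu : 0 <= mu -> forall d, 0 < d -> exists M0, forall M, (M0 <= M)%nat -> 1 - d <= PM mu M.
Proof.
  intros Hmu d Hd.
  destruct (expS_cv mu (d * exp mu)) as [M0 HM0].
  { apply Rmult_lt_0_compat; auto. apply exp_pos. }
  exists M0. intros M HM. specialize (HM0 M HM). unfold Rdist in HM0.
  rewrite PM_eq. pose proof (expS_le mu M Hmu).
  rewrite Rabs_left1 in HM0 by lra.
  assert (exp (- mu) * exp mu = 1) by (rewrite <- exp_plus; replace (- mu + mu) with 0 by ring; apply exp_0).
  assert (exp (- mu) * (exp mu - expS mu M) < exp (-mu) * (d * exp mu)) by (apply Rmult_lt_compat_l; [apply exp_pos|lra]).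
  nra.
Qed.

Lemma pmf_exp_sum mu M : 0 <= mu ->
  sum_f_R0 (fun k => poisson_pmf mu k * exp (-1) ^ k) M <= exp (- mu) * exp (mu * exp (-1)).
Proof.
  intro Hmu.
  replace (sum_f_R0 (fun k => poisson_pmf mu k * exp (-1) ^ k) M) with (exp (- mu) * expS (mu * exp (-1)) M).
  - apply Rmult_le_compat_l. left; apply exp_pos. apply expS_le. apply Rmult_le_pos; auto. left; apply exp_pos.
  - unfold expS. rewrite scal_sum. apply sum_eq. intros k _. unfold poisson_pmf. rewrite Rpow_mult_distr. unfold Rdiv. ring.
Qed.

Lemma exp1_gt2 : 2 < exp 1.
Proof. pose proof (exp_ineq1 1 ltac:(lra)). lra. Qed.

Lemma expm1_le_half : exp (-1) <= / 2.
Proof.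
  replace (exp (-1)) with (/ exp 1) by (rewrite <- exp_Ropp; f_equal; ring). pose proof exp1_gt2. apply Rlt_le. apply Rinv_lt_contravar; lra.
Qed.

Lemma Mx_bound mu M : 16 <= mu -> / 2 <= PM mu M ->
  sum_f_R0 (fun k => poisson_pmf mu k / PM mu M * exp (-1) ^ k) M <= 2 * exp (- mu / 2).
Proof.
  intros Hmu HP.
  assert (HP0 : 0 < PM mu M) by lra.
  replace (sum_f_R0 (fun k => poisson_pmf mu k / PM mu M * exp (-1) ^ k) M)
    with (/ PM mu M * sum_f_R0 (fun k => poisson_pmf mu k * exp (-1) ^ k) M).
  2:{ rewrite scal_sum. apply sum_eq. intros k _. unfold Rdiv. ring. }
  pose proof (pmf_exp_sum mu M ltac:(lra)).
  assert (exp (- mu) * exp (mu * exp (-1)) <= exp (- mu / 2)).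
  { rewrite <- exp_plus. apply exp_le. pose proof expm1_le_half.
    assert (mu * exp (-1) <= mu * / 2) by (apply Rmult_le_compat_l; lra). lra. }
  assert (/ PM mu M <= 2).
  { replace 2 with (/ / 2) by (rewrite Rinv_inv; reflexivity). apply Rinv_le_contravar; lra. }
  assert (0 <= sum_f_R0 (fun k => poisson_pmf mu k * exp (-1) ^ k) M).
  { apply cond_pos_sum. intro k. apply Rmult_le_pos. apply pmf_nonneg; lra. apply pow_le. left; apply exp_pos. }
  assert (0 < / PM mu M) by (apply Rinv_0_lt_compat; auto).
  pose proof (exp_pos (- mu / 2)).
  eapply Rle_trans. apply Rmult_le_compat_l. lra. eapply Rle_trans; eauto.
  apply Rmult_le_compat_r; lra.
Qed.

Lemma small_exp mu : 16 <= mu -> 2 * exp (- mu / 2) <= exp (-7).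
Proof.
  intro. pose proof exp1_gt2.
  assert (exp (- mu / 2) <= exp (-8)) by (apply exp_le; lra).
  assert (exp (-7) = exp 1 * exp (-8)) by (rewrite <- exp_plus; f_equal; ring).
  pose proof (exp_pos (-8)). nra.
Qed.

Definition wt (mu : nat -> R) (M : nat) (i k : nat) : R := poisson_pmf (mu i) k / PM (mu i) M.

Definition Zp (mu : nat -> R) (M : nat) (L : list (nat * nat)) : R :=
  fold_right (fun u acc => PM (mu (fst u)) M * acc) 1 L.

Definition ind nu n (c : config) : R := if event nu n c then 1 else 0.

Lemma WokL_wt mu M L : (forall i j, In (i, j) L -> 0 <= mu i) -> WokL (wt mu M) M L.
Proof.
  intros H i j Hin. pose proof (H i j Hin). pose proof (PM_pos (mu i) M H0). split.
  - intro k. unfold wt. unfold Rdiv. apply Rmult_le_pos. apply pmf_nonneg; auto. left; apply Rinv_0_lt_compat; auto.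
  - unfold wt. unfold Rdiv. rewrite sum_const_mul. fold (PM (mu i) M). field. lra.
Qed.

Lemma csum_En alpha nu n M L : (forall i j, In (i, j) L -> 0 <= tile_mean alpha nu n i) ->
  forall c, csum alpha nu n M L c = Zp (tile_mean alpha nu n) M L * En (wt (tile_mean alpha nu n) M) M L (ind nu n) c.
Proof.
  induction L as [|[i j] L IH]; intros H c; simpl.
  - unfold ind. ring.
  - pose proof (H i j (or_introl eq_refl)) as Hi. pose proof (PM_pos _ M Hi).
    rewrite (sum_eq _ (fun k => (PM (tile_mean alpha nu n i) M * Zp (tile_mean alpha nu n) M L) *
        (wt (tile_mean alpha nu n) M i k * En (wt (tile_mean alpha nu n) M) M L (ind nu n) (upd c i j k)))).
    + rewrite scal_sum. apply sum_eq; intros; ring.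
    + intros k _. rewrite IH by (intros; eapply H; right; eauto). unfold wt. field. lra.
Qed.

Lemma csum_nonneg alpha nu n M L : (forall i j, In (i, j) L -> 0 <= tile_mean alpha nu n i) ->
  forall c, 0 <= csum alpha nu n M L c.
Proof.
  induction L as [|[i j] L IH]; intros H c; simpl.
  - destruct (event nu n c); lra.
  - apply cond_pos_sum. intro k. apply Rmult_le_pos. apply pmf_nonneg. eapply H; left; eauto.
    apply IH. intros; eapply H; right; eauto.
Qed.

Lemma csum_mono alpha nu n M L : (forall i j, In (i, j) L -> 0 <= tile_mean alpha nu n i) ->
  forall c, csum alpha nu n M L c <= csum alpha nu n (S M) L c.
Proof.
  induction L as [|[i j] L IH]; intros H c; simpl.
  - lra.
  - idtac.
    assert (H1 : 0 <= poisson_pmf (tile_mean alpha nu n i) (S M) *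
                csum alpha nu n (S M) L (upd c i j (S M))).
    { apply Rmult_le_pos. apply pmf_nonneg. eapply H; left; eauto.
      apply csum_nonneg. intros; eapply H; right; eauto. }
    assert (sum_f_R0 (fun k => poisson_pmf (tile_mean alpha nu n i) k * csum alpha nu n M L (upd c i j k)) M <=
            sum_f_R0 (fun k => poisson_pmf (tile_mean alpha nu n i) k * csum alpha nu n (S M) L (upd c i j k)) M).
    { apply sum_Rle. intros k _. apply Rmult_le_compat_l. apply pmf_nonneg. eapply H; left; eauto.
      apply IH. intros; eapply H; right; eauto. }
    lra.
Qed.

Lemma Zp_bounds mu M L : (forall i j, In (i, j) L -> 0 <= mu i) -> 0 <= Zp mu M L <= 1.
Proof.
  induction L as [|[i j] L IH]; intros H; simpl. lra.
  pose proof (H i j (or_introl eq_refl)). pose proof (PM_pos (mu i) M H0). pose proof (PM_le1 (mu i) M H0).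
  destruct IH as [IH1 IH2]. intros; eapply H; right; eauto.
  split. apply Rmult_le_pos; lra. 
  assert (PM (mu i) M * Zp mu M L <= 1 * 1) by (apply Rmult_le_compat; lra). lra.
Qed.

Lemma Zp_lower mu M L d : 0 <= d -> (forall i j, In (i, j) L -> 0 <= mu i) ->
  (forall i j, In (i, j) L -> 1 - d <= PM (mu i) M) -> 1 - INR (length L) * d <= Zp mu M L.
Proof.
  intros Hd. induction L as [|[i j] L IH]; intros H1 H2.
  - simpl. lra.
  - change (Zp mu M ((i, j) :: L)) with (PM (mu i) M * Zp mu M L).
    change (length ((i, j) :: L)) with (S (length L)). rewrite S_INR.
    assert (HZ : 0 <= Zp mu M L <= 1) by (apply Zp_bounds; intros; eapply H1; right; eauto).
    assert (IH' : 1 - INR (length L) * d <= Zp mu M L) by (apply IH; intros; [eapply H1|eapply H2]; right; eauto).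
    pose proof (H2 i j (or_introl eq_refl)).
    assert ((1 - d) * Zp mu M L <= PM (mu i) M * Zp mu M L) by (apply Rmult_le_compat_r; lra).
    nra.
Qed.

Lemma in_tiles nu n i j : In (i, j) (tiles nu n) <-> (i <= imax nu n)%nat /\ (j < ntiles nu n i)%nat.
Proof.
  unfold tiles. rewrite in_flat_map. split.
  - intros [i' [Hi' Hm]]. apply in_map_iff in Hm. destruct Hm as [j' [E Hj']]. inversion E; subst.
    apply in_seq in Hi'. apply in_seq in Hj'. lia.
  - intros [Hi Hj]. exists i. split. apply in_seq; lia. apply in_map_iff. exists j. split; auto. apply in_seq; lia.
Qed.

Lemma finite_rows (f : nat -> R) m d : (forall i, (i <= m)%nat -> 0 <= f i) -> 0 < d ->
  exists M0, forall M, (M0 <= M)%nat -> forall i, (i <= m)%nat -> 1 - d <= PM (f i) M.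
Proof.
  intros Hf Hd. induction m as [|m IH].
  - destruct (PM_cv (f 0%nat) (Hf 0%nat (le_n 0)) d Hd) as [M0 HM0]. exists M0.
    intros M HM i Hi. replace i with 0%nat by lia. auto.
  - destruct IH as [M1 HM1]. intros; apply Hf; lia.
    destruct (PM_cv (f (S m)) (Hf (S m) (le_n _)) d Hd) as [M2 HM2].
    exists (max M1 M2). intros M HM i Hi.
    destruct (Nat.eq_dec i (S m)). subst. apply HM2; lia. apply HM1; lia.
Qed.

Lemma prob_bound alpha nu n :
  (1 <= imax nu n)%nat ->
  (forall i, (i <= imax nu n)%nat -> 16 <= tile_mean alpha nu n i) ->
  (forall i, (i < imax nu n)%nat -> ntiles nu n i = (2 * ntiles nu n (S i))%nat) ->
  1 - INR (ntiles nu n (imax nu n)) * (exp 7 * (2 * exp (- tile_mean alpha nu n (imax nu n) / 2)))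
    <= prob_no_demand alpha nu n <= 1.
Proof.
  intros Him Hmu Hnt.
  set (mu := tile_mean alpha nu n) in *.
  set (im := imax nu n) in *.
  set (L := tiles nu n).
  set (c0 := fun _ _ : nat => O).
  set (u := fun M => csum alpha nu n M L c0).
  set (B := INR (ntiles nu n im) * (exp 7 * (2 * exp (- mu im / 2)))).
  assert (Hpos : forall i j, In (i, j) L -> 0 <= mu i).
  { intros i j Hin. apply in_tiles in Hin. specialize (Hmu i (proj1 Hin)). lra. }
  assert (HW : forall M, WokL (wt mu M) M L) by (intro; apply WokL_wt; auto).
  assert (Hind01 : forall c, 0 <= ind nu n c <= 1) by (intro c; unfold ind; destruct (event nu n c); lra).
  assert (Hu : forall M, 0 <= u M <= 1).
  { intro M. unfold u. rewrite csum_En by auto. fold mu.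
    destruct (Zp_bounds mu M L Hpos) as [Z0 Z1].
    assert (0 <= En (wt mu M) M L (ind nu n) c0) by (apply En_nonneg; auto; intro; apply Hind01).
    assert (En (wt mu M) M L (ind nu n) c0 <= 1).
    { rewrite <- (En_const (wt mu M) M L 1 c0 (HW M)). apply En_le; auto. intro; apply Hind01. }
    split. apply Rmult_le_pos; lra.
    assert (Zp mu M L * En (wt mu M) M L (ind nu n) c0 <= 1 * 1) by (apply Rmult_le_compat; lra). lra. }
  assert (Hgrow : Un_growing u) by (intro M; apply csum_mono; auto).
  assert (Hub : has_ub u).
  { exists 1. intros x [M ->]. apply Hu. }
  destruct (growing_cv u Hgrow Hub) as [l Hl].
  assert (Hprob : prob_no_demand alpha nu n = l).
  { unfold prob_no_demand, seq_lim. apply (UL_sequence u); auto.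
    apply epsilon_spec. exists l. exact Hl. }
  rewrite Hprob.
  assert (Hl0 : 0 <= l) by (pose proof (growing_ineq u l Hgrow Hl 0%nat); destruct (Hu 0%nat); lra).
  assert (Hl1 : l <= 1).
  { destruct (Rle_lt_dec l 1) as [|Hlt]; auto.
    destruct (Hl (l - 1)) as [N HN]. lra. specialize (HN N (le_n _)). unfold Rdist in HN.
    destruct (Hu N). rewrite Rabs_left1 in HN; lra. }
  split; auto.
  destruct (finite_rows mu im (/ 2)) as [M1 HM1]. intros i Hi; pose proof (Hmu i Hi); lra. lra.
  assert (HEn : forall M, (M1 <= M)%nat -> 1 - B <= En (wt mu M) M L (ind nu n) c0).
  { intros M HM.
    assert (HMx : forall i, (i <= im)%nat -> Mx (wt mu M) M i <= 2 * exp (- mu i / 2)).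
    { intros i Hi. unfold Mx, wt. apply Mx_bound. apply Hmu; auto. specialize (HM1 M HM i Hi). lra. }
    assert (Hin : forall i j, (i <= im)%nat -> (j < ntiles nu n i)%nat -> In (i, j) L).
    { intros i j Hi Hj. apply in_tiles. auto. }
    assert (Hm7 : forall i, (1 <= i <= im)%nat -> Mx (wt mu M) M i <= exp (-7)).
    { intros i Hi. eapply Rle_trans. apply HMx; lia. apply small_exp. apply Hmu; lia. }
    eapply Rle_trans. 2:{ apply En_le. apply HW. intro c. unfold ind, event. fold im. apply ind_bound. }
    replace (fun c => 1 - SL (seq 0 (ntiles nu n im)) (fun j => Hd c im j - 1))
      with (fun c => 1 + -1 * SL (seq 0 (ntiles nu n im)) (fun j => Hd c im j - 1))
      by (apply functional_extensionality; intro; ring).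
    rewrite En_affine by apply HW.
    rewrite (En_SL (wt mu M) M L (seq 0 (ntiles nu n im)) (fun j c => Hd c im j - 1)) by apply HW.
    assert (SL (seq 0 (ntiles nu n im)) (fun j => En (wt mu M) M L (fun c => Hd c im j - 1) c0) <= B).
    { unfold B. rewrite <- (length_seq (ntiles nu n im) 0) at 2. apply SL_le.
      intros j Hj. apply in_seq in Hj.
      replace (fun c => Hd c im j - 1) with (fun c => -1 + 1 * Hd c im j)
        by (apply functional_extensionality; intro; ring).
      rewrite En_affine by apply HW.
      destruct im as [|i'] eqn:Eim; [lia|].
      pose proof (rec_top (wt mu M) M L (ntiles nu n) (S i') c0 (HW M) Hin Hnt Hm7 i' j (le_n _) ltac:(lia)).
      pose proof (HMx (S i') (le_n _)). pose proof (exp_pos 7). nra. }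
    lra. }
  destruct (Rle_lt_dec (1 - B) l) as [|Hlt]; auto.
  exfalso.
  set (len := INR (length L)).
  assert (Hlen : 0 <= len) by apply pos_INR.
  set (d := (1 - B - l) / (2 * (len + 1))).
  assert (Hd : 0 < d) by (unfold d; apply Rdiv_lt_0_compat; lra).
  destruct (finite_rows mu im d) as [M2 HM2]. intros i Hi; pose proof (Hmu i Hi); lra. auto.
  set (M := max M1 M2).
  assert (HZ : 1 - len * d <= Zp mu M L).
  { apply Zp_lower; auto. lra. intros i j Hij. apply in_tiles in Hij. apply HM2; [lia| tauto]. }
  destruct (Zp_bounds mu M L Hpos) as [HZb0 HZb1].
  pose proof (HEn M ltac:(lia)) as HE.
  assert (HuM : u M = Zp mu M L * En (wt mu M) M L (ind nu n) c0) by (unfold u; apply csum_En; auto).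
  pose proof (growing_ineq u l Hgrow Hl M) as Hul.
  assert (HB0 : 0 <= B).
  { unfold B. apply Rmult_le_pos. apply pos_INR. pose proof (exp_pos 7). pose proof (exp_pos (- mu im / 2)). nra. }
  assert (Hld : len * d <= (1 - B - l) / 2).
  { unfold d. apply (Rmult_le_reg_r (2 * (len + 1))). lra.
    unfold Rdiv. field_simplify; try lra. }
  assert (Zp mu M L * (1 - B) <= u M) by (rewrite HuM; apply Rmult_le_compat_l; lra).
  assert ((1 - len * d) * (1 - B) <= Zp mu M L * (1 - B)) by (apply Rmult_le_compat_r; lra).
  nra.
Qed.

Lemma floorZ_spec x : IZR (floorZ x) <= x /\ x - 1 < IZR (floorZ x).
Proof. unfold floorZ. rewrite minus_IZR. destruct (archimed x). lra. Qed.

Lemma ceilZ_spec y : y <= IZR (ceilZ y) /\ IZR (ceilZ y) < y + 1.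
Proof. unfold ceilZ. rewrite minus_IZR. destruct (archimed (- y)). lra. Qed.

Lemma INR_Ztonat z : (0 <= z)%Z -> INR (Z.to_nat z) = IZR z.
Proof. intro. rewrite INR_IZR_INZ, Z2Nat.id; auto. Qed.

Lemma pow2_exp m : INR (2 ^ m) = exp (INR m * ln 2).
Proof.
  rewrite pow_INR. replace (INR 2) with (exp (ln 2)) by (rewrite exp_ln; simpl; lra).
  rewrite exp_pow_INR. f_equal. ring.
Qed.

Lemma ln2_pos : 0 < ln 2.
Proof. pose proof ln_lt_2. lra. Qed.


Lemma imax_bounds nu n : 0 <= Rrad nu n ->
  (9/10) * Rrad nu n / (2 * ln 2) <= INR (imax nu n) < (9/10) * Rrad nu n / (2 * ln 2) + 1.
Proof.
  intro HR. pose proof ln2_pos.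
  set (y := (9/10) * Rrad nu n / (2 * ln 2)).
  assert (0 <= y) by (unfold y; apply Rmult_le_pos; [lra| left; apply Rinv_0_lt_compat; lra]).
  destruct (ceilZ_spec y) as [H1 H2].
  unfold imax. fold y. rewrite INR_Ztonat. lra.
  apply le_IZR. lra.
Qed.

Definition Eexp nu n i : Z := (4 - Z.of_nat i + floorZ (Rrad nu n / (2 * ln 2)))%Z.

Lemma Eexp_pos nu n i : 0 <= Rrad nu n -> (i <= imax nu n)%nat ->
  IZR (Eexp nu n i) = 4 - INR i + IZR (floorZ (Rrad nu n / (2 * ln 2))) /\
  2 + (1/10) * (Rrad nu n / (2 * ln 2)) < IZR (Eexp nu n i).
Proof.
  intros HR Hi. pose proof ln2_pos.
  assert (HE : IZR (Eexp nu n i) = 4 - INR i + IZR (floorZ (Rrad nu n / (2 * ln 2)))).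
  { unfold Eexp. rewrite plus_IZR, minus_IZR, <- INR_IZR_INZ. reflexivity. }
  split; auto. rewrite HE.
  destruct (floorZ_spec (Rrad nu n / (2 * ln 2))).
  pose proof (imax_bounds nu n HR). apply le_INR in Hi.
  assert ((9/10) * Rrad nu n / (2 * ln 2) = (9/10) * (Rrad nu n / (2 * ln 2))) by (field; lra).
  lra.
Qed.

Lemma ntiles_eq nu n i : 0 <= Rrad nu n -> (i <= imax nu n)%nat ->
  INR (ntiles nu n i) = exp (IZR (Eexp nu n i) * ln 2).
Proof.
  intros HR Hi. destruct (Eexp_pos nu n i HR Hi) as [_ H2].
  assert (0 <= Rrad nu n / (2 * ln 2)) by (apply Rmult_le_pos; auto; left; apply Rinv_0_lt_compat; pose proof ln2_pos; lra).
  unfold ntiles. fold (Eexp nu n i). rewrite pow2_exp, INR_Ztonat. reflexivity.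
  apply le_IZR. lra.
Qed.

Lemma ntiles_double nu n i : 0 <= Rrad nu n -> (i < imax nu n)%nat ->
  ntiles nu n i = (2 * ntiles nu n (S i))%nat.
Proof.
  intros HR Hi. 
  destruct (Eexp_pos nu n (S i) HR Hi) as [_ H2].
  assert (0 <= Rrad nu n / (2 * ln 2)) by (apply Rmult_le_pos; auto; left; apply Rinv_0_lt_compat; pose proof ln2_pos; lra).
  assert (Hz : (0 <= Eexp nu n (S i))%Z) by (apply le_IZR; lra).
  unfold ntiles. fold (Eexp nu n i). fold (Eexp nu n (S i)).
  assert (E : Eexp nu n i = (Eexp nu n (S i) + 1)%Z) by (unfold Eexp; lia).
  rewrite E, Z2Nat.inj_add by lia. rewrite Nat.add_comm. simpl. lia.
Qed.

Lemma Rrad_exp nu n : 0 < nu -> nu < INR n -> exp (Rrad nu n / 2) = INR n / nu.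
Proof.
  intros. unfold Rrad. replace (2 * ln (INR n / nu) / 2) with (ln (INR n / nu)) by field.
  apply exp_ln. apply Rdiv_lt_0_compat; lra.
Qed.

Lemma Rrad_pos nu n : 0 < nu -> nu < INR n -> 0 < Rrad nu n.
Proof.
  intros. unfold Rrad.
  assert (H1 : 1 < INR n / nu).
  { apply (Rmult_lt_reg_r nu); auto. unfold Rdiv. rewrite Rmult_assoc, Rinv_l; lra. }
  pose proof (ln_increasing 1 (INR n / nu) ltac:(lra) H1). rewrite ln_1 in H2. lra.
Qed.

Lemma cosh_diff_lower a d : 0 < d -> d <= a ->
  (exp a * (1 - exp (- d)) - 1) / 2 <= cosh a - cosh (a - d).
Proof.
  intros Hd Ha. unfold cosh.
  assert (exp (a - d) = exp a * exp (- d)) by (rewrite <- exp_plus; f_equal; ring).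
  assert (exp (- (a - d)) <= 1) by (rewrite <- exp_0; apply exp_le; lra).
  pose proof (exp_pos (- a)). lra.
Qed.

Lemma cosh_m1_bounds t : 0 < t -> 0 < cosh t - 1 <= exp t / 2.
Proof.
  intro Ht. unfold cosh. pose proof (exp_ineq1 t ltac:(lra)). pose proof (exp_ineq1_le (- t)).
  assert (exp (- t) <= 1) by (rewrite <- exp_0; apply exp_le; lra). lra.
Qed.

Lemma tile_mean_lower alpha nu n i :
  0 < alpha < 1/2 -> 0 < nu -> nu < INR n ->
  40 * ln 2 <= Rrad nu n ->
  10 * (ln (2 / (1 - exp (- (2 * alpha * ln 2)))) / alpha + 2 * ln 2) <= Rrad nu n ->
  (i <= imax nu n)%nat ->
  nu * (1 - exp (- (2 * alpha * ln 2))) / 32 * exp (INR i * ln 2 * (1 - 2 * alpha))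
    <= tile_mean alpha nu n i.
Proof.
  intros Ha Hnu Hn HR1 HR2 Hi.
  pose proof ln2_pos as Hl2.
  set (Rr := Rrad nu n) in *.
  set (c := 1 - exp (- (2 * alpha * ln 2))) in *.
  assert (HR : 0 < Rr) by (apply Rrad_pos; auto).
  assert (Hc : 0 < c < 1).
  { unfold c. pose proof (exp_pos (- (2 * alpha * ln 2))).
    assert (exp (- (2 * alpha * ln 2)) < 1) by (rewrite <- exp_0; apply exp_increasing; nra). lra. }
  pose proof (imax_bounds nu n (Rlt_le _ _ HR)) as [Hy1 Hy2]. fold Rr in Hy1, Hy2.
  assert (Hii : INR i <= INR (imax nu n)) by (apply le_INR; auto).
  assert (Hx : (9/10) * Rr / (2 * ln 2) * (2 * ln 2) = (9/10) * Rr) by (field; lra).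
  assert (Hib : 2 * INR i * ln 2 <= (9/10) * Rr + 2 * ln 2).
  { assert (INR i * (2 * ln 2) <= ((9/10) * Rr / (2 * ln 2) + 1) * (2 * ln 2)) by (apply Rmult_le_compat_r; lra). nra. }
  set (a := alpha * (Rr - 2 * INR i * ln 2)).
  set (d := 2 * alpha * ln 2).
  assert (Hd : 0 < d) by (unfold d; nra).
  assert (Hrhi : r_hi nu n i = Rr - 2 * INR i * ln 2) by (unfold r_hi; fold Rr; apply Rmax_right; lra).
  assert (Hrlo : r_lo nu n i = Rr - 2 * (INR i + 1) * ln 2) by (unfold r_lo; fold Rr; apply Rmax_right; lra).
  assert (Hab : alpha * r_lo nu n i = a - d) by (rewrite Hrlo; unfold a, d; ring).
  assert (Haa : alpha * r_hi nu n i = a) by (rewrite Hrhi; reflexivity).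
  assert (Hda : d <= a) by (unfold a, d; nra).
  assert (Hln : ln (2 / c) <= a).
  { unfold a. assert (ln (2 / c) / alpha <= Rr / 10 - 2 * ln 2) by lra.
    assert (ln (2 / c) <= alpha * (Rr / 10 - 2 * ln 2)).
    { apply (Rmult_le_compat_l alpha) in H; [|lra]. replace (alpha * (ln (2 / c) / alpha)) with (ln (2 / c)) in H by (field; lra). lra. }
    nra. }
  assert (Hea : 2 <= exp a * c).
  { assert (2 / c <= exp a) by (rewrite <- (exp_ln (2 / c)) by (apply Rdiv_lt_0_compat; lra); apply exp_le; auto).
    apply (Rmult_le_compat_r c) in H; [|lra]. replace (2 / c * c) with 2 in H by (field; lra). lra. }
  pose proof (cosh_diff_lower a d Hd Hda) as Hcd. replace (1 - exp (- d)) with c in Hcd by (unfold c, d; ring).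
  assert (Hcd' : exp a * c / 4 <= cosh a - cosh (a - d)) by lra.
  pose proof (cosh_m1_bounds (alpha * Rr) ltac:(nra)) as [HD1 HD2].
  pose proof (ntiles_eq nu n i (Rlt_le _ _ HR) Hi) as Hnt. fold Rr in Hnt.
  destruct (Eexp_pos nu n i (Rlt_le _ _ HR) Hi) as [HE _]. fold Rr in HE.
  destruct (floorZ_spec (Rr / (2 * ln 2))) as [HF _].
  set (nt := INR (ntiles nu n i)) in *.
  assert (Hnt_pos : 0 < nt) by (rewrite Hnt; apply exp_pos).
  assert (Hnt_le : nt <= exp ((4 - INR i) * ln 2 + Rr / 2)).
  { rewrite Hnt. apply exp_le. rewrite HE.
    assert (Rr / (2 * ln 2) * ln 2 = Rr / 2) by (field; lra).
    assert (IZR (floorZ (Rr / (2 * ln 2))) * ln 2 <= Rr / (2 * ln 2) * ln 2) by (apply Rmult_le_compat_r; lra).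
    nra. }
  assert (Htm : tile_mean alpha nu n i = INR n / nt * ((cosh a - cosh (a - d)) / (cosh (alpha * Rr) - 1))).
  { unfold tile_mean. fold Rr. rewrite Haa, Hab. fold nt. field. split; [lra|]. split; [lra|]. pose proof PI_RGT_0; lra. }
  rewrite Htm.
  assert (Hq : c / 2 * exp (a - alpha * Rr) <= (cosh a - cosh (a - d)) / (cosh (alpha * Rr) - 1)).
  { apply (Rmult_le_reg_r (cosh (alpha * Rr) - 1)); auto.
    replace ((cosh a - cosh (a - d)) / (cosh (alpha * Rr) - 1) * (cosh (alpha * Rr) - 1)) with (cosh a - cosh (a - d)) by (field; lra).
    assert (exp (a - alpha * Rr) * exp (alpha * Rr) = exp a) by (rewrite <- exp_plus; f_equal; ring).
    pose proof (exp_pos (a - alpha * Rr)).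
    assert (c / 2 * exp (a - alpha * Rr) * (cosh (alpha * Rr) - 1) <= c / 2 * exp (a - alpha * Rr) * (exp (alpha * Rr) / 2)).
    { apply Rmult_le_compat_l; auto. apply Rmult_le_pos; lra. }
    nra. }
  assert (Hn1 : nu * exp ((INR i - 4) * ln 2) <= INR n / nt).
  { apply (Rmult_le_reg_r nt); auto. replace (INR n / nt * nt) with (INR n) by (field; lra).
    assert (exp ((INR i - 4) * ln 2) * exp ((4 - INR i) * ln 2 + Rr / 2) = exp (Rr / 2)) by (rewrite <- exp_plus; f_equal; ring).
    assert (HRe : exp (Rr / 2) = INR n / nu) by (apply Rrad_exp; auto). rewrite HRe in H.
    assert (nu * exp ((INR i - 4) * ln 2) * nt <= nu * exp ((INR i - 4) * ln 2) * exp ((4 - INR i) * ln 2 + Rr / 2)).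
    { apply Rmult_le_compat_l; auto. apply Rmult_le_pos. lra. left; apply exp_pos. }
    assert (nu * (INR n / nu) = INR n) by (field; lra). nra. }
  assert (Hfin : nu * c / 32 * exp (INR i * ln 2 * (1 - 2 * alpha)) = nu * exp ((INR i - 4) * ln 2) * (c / 2 * exp (a - alpha * Rr))).
  { assert (exp ((INR i - 4) * ln 2) * exp (a - alpha * Rr) = exp (INR i * ln 2 * (1 - 2 * alpha)) * exp (- (4 * ln 2))).
    { rewrite <- !exp_plus. f_equal. unfold a. ring. }
    assert (exp (- (4 * ln 2)) = / 16).
    { rewrite exp_Ropp. f_equal. replace (4 * ln 2) with (ln 2 + ln 2 + ln 2 + ln 2) by ring. rewrite !exp_plus, exp_ln by lra. ring. }
    replace (nu * exp ((INR i - 4) * ln 2) * (c / 2 * exp (a - alpha * Rr))) with (nu * c / 2 * (exp ((INR i - 4) * ln 2) * exp (a - alpha * Rr))) by field.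
    rewrite H, H0. field. }
  rewrite Hfin. apply Rmult_le_compat; auto.
  - apply Rmult_le_pos. lra. left; apply exp_pos.
  - apply Rmult_le_pos. lra. left; apply exp_pos.
Qed.

Lemma ntiles_le nu n i : 0 < nu -> nu < INR n -> (i <= imax nu n)%nat ->
  INR (ntiles nu n i) <= exp ((4 - INR i) * ln 2 + Rrad nu n / 2).
Proof.
  intros Hnu Hn Hi. pose proof ln2_pos.
  assert (HR : 0 < Rrad nu n) by (apply Rrad_pos; auto).
  rewrite (ntiles_eq nu n i (Rlt_le _ _ HR) Hi). apply exp_le.
  destruct (Eexp_pos nu n i (Rlt_le _ _ HR) Hi) as [HE _]. rewrite HE.
  destruct (floorZ_spec (Rrad nu n / (2 * ln 2))) as [HF _].
  assert (Rrad nu n / (2 * ln 2) * ln 2 = Rrad nu n / 2) by (field; lra).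
  assert (IZR (floorZ (Rrad nu n / (2 * ln 2))) * ln 2 <= Rrad nu n / (2 * ln 2) * ln 2) by (apply Rmult_le_compat_r; lra).
  nra.
Qed.

Lemma exp_4ln2 : exp (4 * ln 2) = 16.
Proof. replace (4 * ln 2) with (ln 2 + ln 2 + ln 2 + ln 2) by ring. rewrite !exp_plus, exp_ln by lra. ring. Qed.

Theorem mainTheorem13 (alpha : R) (Halpha : 0 < alpha < 1 / 2) :
  exists nu0 : R, 0 < nu0 /\
    forall nu : R, nu0 <= nu ->
      forall eps : R, 0 < eps ->
        exists N : nat, forall n : nat, (N <= n)%nat -> nu < INR n ->
          Rabs (1 - prob_no_demand alpha nu n) <= eps / sqrt (INR n).
Proof.
  pose proof ln2_pos as Hl2.
  set (c := 1 - exp (- (2 * alpha * ln 2))).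
  assert (Hc : 0 < c < 1).
  { unfold c. pose proof (exp_pos (- (2 * alpha * ln 2))).
    assert (exp (- (2 * alpha * ln 2)) < 1) by (rewrite <- exp_0; apply exp_increasing; nra). lra. }
  exists (512 / c). split. apply Rdiv_lt_0_compat; lra.
  intros nu Hnu eps Heps.
  assert (Hnu512 : 512 <= nu * c).
  { apply (Rmult_le_compat_r c) in Hnu; [|lra]. replace (512 / c * c) with 512 in Hnu by (field; lra). lra. }
  assert (Hnu1 : 512 <= nu) by nra.
  set (beta := 9 / 20 * (1 - 2 * alpha)).
  assert (Hbeta : 0 < beta) by (unfold beta; lra).
  destruct (INR_archimed 1 (/ beta + 1)) as [k Hk]. lra. rewrite Rmult_1_r in Hk.
  assert (Hbk : 1 <= beta * (INR k - 1)).
  { assert (/ beta < INR k - 1) by lra. apply (Rmult_lt_compat_l beta) in H; auto.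
    rewrite Rinv_r in H; lra. }
  assert (Hk1 : (1 <= k)%nat).
  { destruct k. simpl in Hk. pose proof (Rinv_0_lt_compat beta Hbeta). lra. lia. }
  set (Y0 := 32 * exp 7 * nu * INR (fact k) / eps).
  assert (HY0 : 0 < Y0).
  { unfold Y0. apply Rdiv_lt_0_compat; auto. pose proof (exp_pos 7). pose proof (INR_fact_lt_0 k).
    apply Rmult_lt_0_compat; [|auto]. apply Rmult_lt_0_compat; [|lra]. lra. }
  set (R0 := Rmax (40 * ln 2) (Rmax (10 * (ln (2 / c) / alpha + 2 * ln 2)) (ln Y0 / beta))).
  destruct (INR_archimed 1 (nu * exp (R0 / 2))) as [N HN]. lra. rewrite Rmult_1_r in HN.
  exists N. intros n HnN Hn.
  set (Rr := Rrad nu n).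
  assert (HRr : R0 < Rr).
  { apply le_INR in HnN.
    assert (exp (R0 / 2) < INR n / nu).
    { apply (Rmult_lt_reg_l nu). lra. replace (nu * (INR n / nu)) with (INR n) by (field; lra). lra. }
    assert (R0 / 2 < ln (INR n / nu)).
    { rewrite <- (ln_exp (R0 / 2)). apply ln_increasing; auto. apply exp_pos. }
    unfold Rr, Rrad. lra. }
  assert (HR1 : 40 * ln 2 <= Rr) by (unfold R0 in HRr; pose proof (Rmax_l (40 * ln 2) (Rmax (10 * (ln (2 / c) / alpha + 2 * ln 2)) (ln Y0 / beta))); lra).
  assert (HR2 : 10 * (ln (2 / c) / alpha + 2 * ln 2) <= Rr).
  { unfold R0 in HRr. pose proof (Rmax_r (40 * ln 2) (Rmax (10 * (ln (2 / c) / alpha + 2 * ln 2)) (ln Y0 / beta))).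
    pose proof (Rmax_l (10 * (ln (2 / c) / alpha + 2 * ln 2)) (ln Y0 / beta)). lra. }
  assert (HR3 : ln Y0 / beta <= Rr).
  { unfold R0 in HRr. pose proof (Rmax_r (40 * ln 2) (Rmax (10 * (ln (2 / c) / alpha + 2 * ln 2)) (ln Y0 / beta))).
    pose proof (Rmax_r (10 * (ln (2 / c) / alpha + 2 * ln 2)) (ln Y0 / beta)). lra. }
  assert (Hnu0 : 0 < nu) by lra.
  assert (HRpos : 0 < Rr) by (apply Rrad_pos; auto).
  pose proof (imax_bounds nu n (Rlt_le _ _ HRpos)) as [Hy1 Hy2]. fold Rr in Hy1, Hy2.
  assert (Hy0 : 0 < 9 / 10 * Rr / (2 * ln 2)) by (apply Rdiv_lt_0_compat; lra).
  assert (Him : (1 <= imax nu n)%nat).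
  { destruct (imax nu n) eqn:E. simpl in Hy1. lra. lia. }
  assert (Hlow : forall i, (i <= imax nu n)%nat ->
     nu * c / 32 * exp (INR i * ln 2 * (1 - 2 * alpha)) <= tile_mean alpha nu n i).
  { intros i Hi. apply tile_mean_lower; auto. }
  assert (Hmu : forall i, (i <= imax nu n)%nat -> 16 <= tile_mean alpha nu n i).
  { intros i Hi. eapply Rle_trans; [|apply Hlow; auto].
    assert (1 <= exp (INR i * ln 2 * (1 - 2 * alpha))).
    { apply Rle_trans with (exp 0); [rewrite exp_0; lra|]. apply exp_le. pose proof (pos_INR i). apply Rmult_le_pos. apply Rmult_le_pos; lra. lra. }
    assert (16 <= nu * c / 32) by lra.
    nra. }
  destruct (prob_bound alpha nu n Him Hmu (fun i Hi => ntiles_double nu n i (Rlt_le _ _ HRpos) Hi)) as [HP1 HP2].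
  rewrite Rabs_right by lra.
  set (im := imax nu n) in *.
  set (mu := tile_mean alpha nu n im) in *.
  set (Y := exp (beta * Rr)).
  assert (HY : 0 < Y) by apply exp_pos.
  assert (Hmu2 : Y <= mu / 2).
  { pose proof (Hlow im (le_n _)) as H. fold mu in H.
    assert (beta * Rr <= INR im * ln 2 * (1 - 2 * alpha)).
    { unfold beta. assert (9 / 10 * Rr / (2 * ln 2) * ln 2 = 9 / 20 * Rr) by (field; lra).
      assert (9 / 10 * Rr / (2 * ln 2) * ln 2 <= INR im * ln 2) by (apply Rmult_le_compat_r; lra).
      assert (9 / 20 * Rr <= INR im * ln 2) by lra.
      apply (Rmult_le_compat_r (1 - 2 * alpha)) in H2; [|lra]. lra. }
    assert (Y <= exp (INR im * ln 2 * (1 - 2 * alpha))) by (apply exp_le; auto).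
    assert (16 <= nu * c / 32) by lra. nra. }
  assert (Hnt : INR (ntiles nu n im) <= 16 * exp (Rr / 2)).
  { eapply Rle_trans. apply ntiles_le; auto. rewrite <- exp_4ln2, <- exp_plus. apply exp_le.
    pose proof (pos_INR im). fold Rr. nra. }
  assert (HeY : exp (- mu / 2) <= exp (- Y)) by (apply exp_le; lra).
  set (B := INR (ntiles nu n im) * (exp 7 * (2 * exp (- mu / 2)))) in *.
  assert (HB : B <= 16 * exp (Rr / 2) * (exp 7 * (2 * exp (- Y)))).
  { unfold B. apply Rmult_le_compat; auto. apply pos_INR.
    pose proof (exp_pos 7). pose proof (exp_pos (- mu / 2)). nra.
    pose proof (exp_pos 7). nra. }
  assert (Hsq0 : 0 < sqrt (INR n)) by (apply sqrt_lt_R0; lra).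
  assert (Hsq : sqrt (INR n) <= nu * exp (Rr / 2)).
  { assert (INR n = nu * exp (Rr / 2)) by (unfold Rr; rewrite Rrad_exp; auto; field; lra).
    rewrite <- H. left. apply sqrt_less_alt. lra. }
  assert (HeYk : exp (- Y) <= INR (fact k) / Y ^ k).
  { pose proof (exp_ge_pow Y k (Rlt_le _ _ HY)).
    pose proof (INR_fact_lt_0 k). pose proof (pow_lt Y k HY).
    rewrite exp_Ropp. apply (Rmult_le_reg_r (exp Y)). apply exp_pos. rewrite Rinv_l by (pose proof (exp_pos Y); lra).
    apply (Rmult_le_reg_r (/ INR (fact k))). apply Rinv_0_lt_compat; auto.
    replace (INR (fact k) / Y ^ k * exp Y * / INR (fact k)) with (exp Y / Y ^ k) by (field; lra).
    rewrite Rmult_1_l. apply (Rmult_le_reg_r (Y ^ k)); auto.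
    replace (exp Y / Y ^ k * Y ^ k) with (exp Y) by (field; lra).
    replace (/ INR (fact k) * Y ^ k) with (Y ^ k / INR (fact k)) by (field; lra). auto. }
  assert (HYk : exp Rr <= Y ^ (k - 1)).
  { unfold Y. rewrite exp_pow_INR. apply exp_le. rewrite minus_INR by lia. simpl INR at 2.
    assert (Rr * 1 <= Rr * (beta * (INR k - 1))) by (apply Rmult_le_compat_l; lra). nra. }
  assert (HYk2 : Y ^ k = Y ^ (k - 1) * Y).
  { replace k with (S (k - 1)) at 1 by lia. simpl. ring. }
  assert (HYY0 : Y0 <= Y).
  { unfold Y. rewrite <- (exp_ln Y0) by auto. apply exp_le.
    apply (Rmult_le_compat_l beta) in HR3; [|lra]. replace (beta * (ln Y0 / beta)) with (ln Y0) in HR3 by (field; lra). lra. }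
  apply (Rmult_le_reg_r (sqrt (INR n))); auto.
  replace (eps / sqrt (INR n) * sqrt (INR n)) with eps by (field; lra).
  assert (HB0 : 0 <= B).
  { unfold B. apply Rmult_le_pos. apply pos_INR. pose proof (exp_pos 7). pose proof (exp_pos (- mu / 2)). nra. }
  assert (Hstep1 : B * sqrt (INR n) <= 16 * exp (Rr / 2) * (exp 7 * (2 * (INR (fact k) / Y ^ k))) * (nu * exp (Rr / 2))).
  { apply Rmult_le_compat; auto. lra. eapply Rle_trans; [apply HB|].
    apply Rmult_le_compat_l. pose proof (exp_pos (Rr / 2)). lra.
    apply Rmult_le_compat_l. pose proof (exp_pos 7). lra. lra. }
  assert (Hee : exp (Rr / 2) * exp (Rr / 2) = exp Rr) by (rewrite <- exp_plus; f_equal; field).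
  assert (HYk1 : 0 < Y ^ (k - 1)) by (apply pow_lt; auto).
  assert (Hstep2 : 16 * exp (Rr / 2) * (exp 7 * (2 * (INR (fact k) / Y ^ k))) * (nu * exp (Rr / 2))
                   = 32 * exp 7 * nu * INR (fact k) * (exp Rr / Y ^ (k - 1)) / Y).
  { rewrite <- Hee, HYk2. field. lra. }
  assert (Hstep3 : exp Rr / Y ^ (k - 1) <= 1).
  { apply (Rmult_le_reg_r (Y ^ (k - 1))); auto. replace (exp Rr / Y ^ (k - 1) * Y ^ (k - 1)) with (exp Rr) by (field; lra). lra. }
  assert (HC0 : 0 < 32 * exp 7 * nu * INR (fact k)).
  { pose proof (exp_pos 7). pose proof (INR_fact_lt_0 k). apply Rmult_lt_0_compat; [|auto]. apply Rmult_lt_0_compat; lra. }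
  assert (Hstep4 : 32 * exp 7 * nu * INR (fact k) * (exp Rr / Y ^ (k - 1)) / Y <= 32 * exp 7 * nu * INR (fact k) / Y).
  { unfold Rdiv. apply Rmult_le_compat_r. left; apply Rinv_0_lt_compat; auto.
    pose proof (exp_pos Rr). assert (0 <= exp Rr * / Y ^ (k - 1)) by (apply Rmult_le_pos; [lra| left; apply Rinv_0_lt_compat; auto]).
    unfold Rdiv in Hstep3. nra. }
  assert (Hstep5 : 32 * exp 7 * nu * INR (fact k) / Y <= eps).
  { apply (Rmult_le_reg_r Y); auto. replace (32 * exp 7 * nu * INR (fact k) / Y * Y) with (32 * exp 7 * nu * INR (fact k)) by (field; lra).
    unfold Y0 in HYY0. apply (Rmult_le_compat_l eps) in HYY0; [|lra].
    replace (eps * (32 * exp 7 * nu * INR (fact k) / eps)) with (32 * exp 7 * nu * INR (fact k)) in HYY0 by (field; lra). lra. }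
  assert ((1 - prob_no_demand alpha nu n) * sqrt (INR n) <= B * sqrt (INR n)) by (apply Rmult_le_compat_r; lra).
  lra.
Qed.
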